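(* Let $G$ be a finite simple graph with $n\ge4$ vertices such that every induced subgraph of $G$ on four vertices contains $K_{1,3}$ as a (not necessarily induced) subgraph. Then $G$ contains $K_{n-3}+\epsilon_3$ as a subgraph.
   Context: $K_{1,3}$ is the star with one center and three leaves; $\epsilon_3$ is the graph with three vertices and no edges; $K_{n-3}+\epsilon_3$ is obtained from disjoint copies of the complete graph $K_{n-3}$ and $\epsilon_3$ by adding all edges between them. *)

(* Defs.v *)
From mathcomp Require Import all_boot.
Set Implicit Arguments. Unset Strict Implicit. Unset Printing Implicit Defensive.

Definition simple_graph (V : finType) (e : rel V) : Prop :=
  symmetric e /\ irreflexive e.

Definition contains_subgraph (V1 V2 : finType) (e1 : rel V1) (e2 : rel V2) : Prop :=
  exists f : V1 -> V2, injective f /\ forall x y, e1 x y -> e2 (f x) (f y).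

Definition induced_vertices (V : finType) (S : {set V}) : finType :=
  {x : V | x \in S}.
Definition induced (V : finType) (e : rel V) (S : {set V}) : rel (induced_vertices S) :=
  fun x y => e (val x) (val y).

(* The star K_{1,3}: center 0, leaves 1,2,3. *)
Definition K13_rel : rel 'I_4 :=
  fun x y => (x != y) && ((val x == 0) || (val y == 0)).

(* K_m + eps_3: complete graph on 'I_m joined to the empty graph on 'I_3. *)
Definition Kjoin_eps3_rel (m : nat) : rel ('I_m + 'I_3) :=
  fun x y => match x, y with
             | inl a, inl b => a != b
             | inl _, inr _ => true
             | inr _, inl _ => true
             | inr _, inr _ => false
             end.
Arguments induced {V} e S.
Arguments Kjoin_eps3_rel m : clear implicits.

(* Main.v *)
Require Import Defs.
From mathcomp Require Import all_boot.

Section S.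
Variables (V : finType) (e : rel V).
Hypothesis esym : symmetric e.
Hypothesis eirr : irreflexive e.
Hypothesis H4 : forall S : {set V}, #|S| = 4 -> contains_subgraph K13_rel (induced e S).

Lemma star (S : {set V}) : #|S| = 4 -> exists2 c, c \in S & forall y, y \in S -> y != c -> e c y.
Proof.
move=> HS; have [f [finj fE]] := H4 S HS.
have fbij : bijective f.
  apply: (inj_card_bij finj); rewrite card_ord /induced_vertices card_sig.
  by rewrite (eq_card (B:=S)) // HS.
exists (val (f ord0)); first exact: valP.
move=> y yS ny.
have [g fg gf] := fbij.
set yy : induced_vertices S := exist _ y yS.
have -> : y = val (f (g yy)) by rewrite gf.
apply: (fE ord0 (g yy)).
rewrite /K13_rel /= andbT.
apply/eqP => h0; move: ny; rewrite h0 gf /=; by rewrite eqxx.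
Qed.

Definition nonadj u v := (u != v) && ~~ e u v.

Lemma four (S : {set V}) : #|S| = 4 -> (forall x, x \in S -> exists2 d, d \in S & nonadj x d) -> False.
Proof.
move=> HS Hx; have [c cS cA] := star S HS.
have [d dS] := Hx c cS; rewrite /nonadj => /andP[cd ncd].
by move: ncd; rewrite cA // eq_sym.
Qed.

Lemma card4 (a b x y : V) : a != b -> a != x -> a != y -> b != x -> b != y -> x != y ->
  #|a |: (b |: (x |: [set y]))| = 4.
Proof.
move=> ab ax ay bx b_y xy.
rewrite !cardsU1 cards1 !inE !negb_or ab ax ay bx b_y xy.
by [].
Qed.
Lemma nonadj_sym u v : nonadj u v = nonadj v u.
Proof. by rewrite /nonadj eq_sym esym. Qed.

Definition W := [set v | [exists u, nonadj v u]].

Lemma W_small : #|W| <= 3.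
Proof.
have [W0|[a aW]] := set_0Vmem W; first by rewrite W0 cards0.
move: (aW); rewrite inE => /existsP[b ab].
have ba : nonadj b a by rewrite nonadj_sym.
have nab : a != b by case/andP: ab.
have claim1 : forall x, x \in W -> x != a -> x != b -> nonadj x a || nonadj x b.
  move=> x; rewrite inE => /existsP[d xd] xa xb.
  have [da|nda] := eqVneq d a; first by rewrite -da xd.
  have [db|ndb] := eqVneq d b; first by rewrite -db xd orbT.
  have nxd : x != d by case/andP: xd.
  exfalso; apply: (four (a |: (b |: (x |: [set d])))).
    by apply: card4 => //; rewrite eq_sym.
  move=> z; rewrite !inE => /or4P [] /eqP->.
  - by exists b; rewrite ?inE ?eqxx ?orbT.
  - by exists a; rewrite ?inE ?eqxx ?orbT.
  - by exists d; rewrite ?inE ?eqxx ?orbT.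
  - by exists x; rewrite ?inE ?eqxx ?orbT // nonadj_sym.
have le1 : #|W :\: (a |: [set b])| <= 1.
  apply/card_le1_eqP => x y; rewrite !in_setD !in_setU1 !in_set1.
  move=> /andP[/norP[xa xb] xW] /andP[/norP[ya yb] yW].
  apply/eqP/negPn/negP => nxy; apply: (four (a |: (b |: (x |: [set y])))).
    by apply: card4 => //; rewrite eq_sym.
  move=> z; rewrite !inE => /or4P [] /eqP->.
  - by exists b; rewrite ?inE ?eqxx ?orbT.
  - by exists a; rewrite ?inE ?eqxx ?orbT.
  - by case/orP: (claim1 x xW xa xb) => h; [exists a|exists b]; rewrite ?inE ?eqxx ?orbT.
  - by case/orP: (claim1 y yW ya yb) => h; [exists a|exists b]; rewrite ?inE ?eqxx ?orbT.
rewrite -(cardsID (a |: [set b])).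
have : #|W :&: (a |: [set b])| <= 2.
  apply: leq_trans (subset_leq_card (subsetIr _ _)) _.
  by rewrite cardsU1 cards1; case: (a \notin _).
move=> h; exact: leq_add h le1.
Qed.
End S.
Theorem mainTheorem15 (V : finType) (e : rel V) :
  simple_graph e ->
  4 <= #|V| ->
  (forall S : {set V}, #|S| = 4 -> contains_subgraph K13_rel (induced e S)) ->
  contains_subgraph (Kjoin_eps3_rel (#|V| - 3)) e.
Proof.
move=> [esym eirr] n4 H.
have Ws : #|(@W V e)| <= 3 := @W_small V e esym H.
have : 0 < #|V| by apply: leq_trans n4.
case/card_gt0P => x0 _.
pose p := fun x : V => x \notin (@W V e).
pose s1 := [seq x <- enum V | p x].
pose s2 := [seq x <- enum V | predC p x].
pose s := s1 ++ s2.
have ps : perm_eq s (enum V) by rewrite /s perm_filterC perm_refl.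
have us : uniq s by rewrite (perm_uniq ps) enum_uniq.
have ss : size s = #|V| by rewrite (perm_size ps) cardE.
have s2le : size s2 <= 3.
  apply: leq_trans Ws; rewrite cardE; apply: uniq_leq_size.
    exact: filter_uniq (enum_uniq _).
  move=> x; rewrite mem_filter /p /= negbK => /andP[xW _]; by rewrite mem_enum.
have s1ge : #|V| - 3 <= size s1.
  by move: ss; rewrite size_cat => <-; rewrite leq_subLR addnC leq_add2r.
have notW : forall u v, u \notin (@W V e) -> u != v -> e u v.
  move=> u v uW uv; move: uW; rewrite inE negb_exists => /forallP/(_ v).
  by rewrite /nonadj uv /= negbK.
pose idx (x : 'I_(#|V| - 3) + 'I_3) :=
  match x with inl i => nat_of_ord i | inr j => #|V| - 3 + nat_of_ord j end.
have idxlt : forall x, idx x < size s.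
  rewrite ss => -[i|j] /=.
    by apply: leq_trans (ltn_ord i) _; apply: leq_subr.
  apply: (@leq_trans (#|V| - 3 + 3)); first by rewrite ltn_add2l.
  by rewrite subnK //; apply: leq_trans n4.
have idxinj : injective idx.
  move=> [i|i] [j|j] /= h.
  - by congr inl; apply: val_inj.
  - by move: (ltn_ord i); rewrite h ltnNge leq_addr.
  - by move: (ltn_ord j); rewrite -h ltnNge leq_addr.
  - by congr inr; apply: val_inj; apply: addnI h.
pose f x := nth x0 s (idx x).
have finj : injective f.
  move=> x y /eqP; rewrite /f nth_uniq ?idxlt // => /eqP; exact: idxinj.
have fnW : forall i, f (inl i) \notin (@W V e).
  move=> i; rewrite /f /s /= nth_cat.
  have hi : i < size s1 by apply: leq_trans (ltn_ord i) s1ge.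
  rewrite hi.
  have := mem_nth x0 hi; rewrite mem_filter => /andP[]; done.
have fneq : forall x y, x != y -> f x != f y.
  by move=> x y; apply: contra => /eqP/finj/eqP.
exists f; split => //.
move=> [i|i] [j|j] //= h.
- by apply: notW (fnW _) (fneq _ _ _); apply: contra h => /eqP [->].
- by apply: notW (fnW _) (fneq _ _ _).
- by rewrite esym; apply: notW (fnW _) (fneq _ _ _).
Qed.
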